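(* Let $\alpha\in(0,1)$, $\eta>0$, and run the generalized share algorithm with the projection mixing rule $\hat p_{t+1}\in\arg\min_{x\in\Delta_d^\alpha}\mathcal K(x,v_{t+1})$. Then for all $t\ge1$, all loss sequences in $[0,1]^d$, and all $q_t\in\Delta_d^\alpha$, \[ (\hat p_t-q_t)^\top\ell_t\le\frac1\eta\sum_{i=1}^d q_{i,t}\ln\frac{\hat p_{i,t+1}}{\hat p_{i,t}}+\frac\eta8 . \]
   Context: Let $d\ge1$ and $\Delta_d=\{q\in[0,1]^d:\sum_{i=1}^d q_i=1\}$. The generalized share algorithm with learning rate $\eta>0$ and mixing functions $\psi_t:[0,1]^{td}\to\Delta_d$ ($t\ge2$) works as follows: $\hat p_1=v_1=(1/d,\dots,1/d)$. At each round $t=1,2,\dots$ it predicts $\hat p_t=(\hat p_{1,t},\dots,\hat p_{d,t})\in\Delta_d$, observes a loss vector $\ell_t=(\ell_{1,t},\dots,\ell_{d,t})\in[0,1]^d$ (arbitrary), and suffers loss $\hat p_t^\top\ell_t$. It then forms the pre-weights $v_{j,t+1}=\hat p_{j,t}e^{-\eta\ell_{j,t}}/\sum_{i=1}^d\hat p_{i,t}e^{-\eta\ell_{i,t}}$ for $j=1,\dots,d$, sets $v_{t+1}=(v_{1,t+1},\dots,v_{d,t+1})$, and defines $\hat p_{t+1}=\psi_{t+1}(V_{t+1})$ where $V_{t+1}=[v_{i,s}]_{1\le i\le d,1\le s\le t+1}$ is the $d\times(t+1)$ matrix of all pre-weights so far. Here $\Delta_d^\alpha=[\alpha/d,1]^d\cap\Delta_d$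 and $\mathcal K(x,v)=\sum_{i=1}^d x_i\ln(x_i/v_i)$ is the Kullback–Leibler divergence. *)

(* Defs.v *)
(* real numbers, exp, ln. Vectors in R^d are functions
   nat -> R, with coordinates indexed 0 .. d-1. *)
From Stdlib Require Import Reals.
Open Scope R_scope.

Fixpoint sumd (d : nat) (f : nat -> R) : R :=
  match d with
  | O => 0
  | S n => sumd n f + f n
  end.

Definition in_simplex (d : nat) (x : nat -> R) : Prop :=
  (forall i, (i < d)%nat -> 0 <= x i <= 1) /\ sumd d x = 1.

Definition in_simplex_alpha (d : nat) (alpha : R) (x : nat -> R) : Prop :=
  in_simplex d x /\ (forall i, (i < d)%nat -> alpha / INR d <= x i).

Definition KL (d : nat) (x v : nat -> R) : R :=
  sumd d (fun i => x i * ln (x i / v i)).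

Definition preweight (d : nat) (eta : R) (p l : nat -> R) : nat -> R :=
  fun j => p j * exp (- eta * l j) /
           sumd d (fun i => p i * exp (- eta * l i)).

(* p : round t -> weight vector \hat p_t (rounds t >= 1);
   l : round t -> loss vector \ell_t.
   p is a run of the generalized share algorithm with the projection
   mixing rule \hat p_{t+1} \in argmin_{x in Delta_d^alpha} K(x, v_{t+1}). *)
Definition share_projection_run (d : nat) (alpha eta : R)
    (l p : nat -> nat -> R) : Prop :=
  (forall i, (i < d)%nat -> p 1%nat i = 1 / INR d) /\
  (forall t, (1 <= t)%nat ->
     in_simplex_alpha d alpha (p (S t)) /\
     (forall x, in_simplex_alpha d alpha x ->
        KL d (p (S t)) (preweight d eta (p t) (l t))
        <= KL d x (preweight d eta (p t) (l t)))).

(* Main.v *)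
Require Import Defs.
From Stdlib Require Import Reals Lra Psatz.
From Coquelicot Require Import Coquelicot.
Open Scope R_scope.

Lemma gprime_nonneg (m c : R) : 0 <= m <= 1 -> 0 <= c ->
  0 <= -m + c/4 + m*exp(-c)/(1-m+m*exp(-c)).
Proof.
  intros Hm Hc.
  set (h := fun x => -m + x/4 + m*exp(-x)/(1-m+m*exp(-x))).
  assert (HD : forall x, 0 < 1-m+m*exp(-x)).
  { intro x. pose proof (exp_pos (-x)). destruct (Req_dec m 0); [subst; lra|]. nra. }
  assert (Hh : forall x, is_derive h x (1/4 - m*exp(-x)*(1-m)/((1-m+m*exp(-x))^2))).
  { intro x. unfold h. auto_derive. { specialize (HD x); lra. }
    specialize (HD x). field. lra. }
  destruct (Req_dec c 0) as [->|Hc0].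
  { change (0 <= h 0). unfold h. rewrite Ropp_0, exp_0. specialize (HD 0). rewrite Ropp_0, exp_0 in HD.
    replace (1-m+m*1) with 1 by ring. lra. }
  destruct (MVT_cor3 h (fun x => 1/4 - m*exp(-x)*(1-m)/((1-m+m*exp(-x))^2)) 0 c)
    as [e [He1 [He2 He3]]]; [lra| intros; apply is_derive_Reals, Hh |].
  change (0 <= h c). rewrite He3.
  assert (h 0 = 0).
  { unfold h. rewrite Ropp_0, exp_0. replace (1-m+m*1) with 1 by ring. field. }
  rewrite H.
  assert (0 <= 1/4 - m*exp(-e)*(1-m)/((1-m+m*exp(-e))^2)).
  { specialize (HD e). pose proof (exp_pos (-e)).
    assert (m * exp (- e) * (1 - m) <= (1 - m + m * exp (- e)) ^ 2 / 4) by (pose proof (pow2_ge_0 (1-m - m*exp(-e))); nra).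
    assert (m * exp (- e) * (1 - m) / (1 - m + m * exp (- e)) ^ 2 <= 1/4).
    { unfold Rdiv at 1. apply Rle_trans with (((1 - m + m * exp (- e)) ^ 2 / 4) * / (1 - m + m * exp (- e)) ^ 2).
      apply Rmult_le_compat_r. left; apply Rinv_0_lt_compat; nra. lra. right; field; lra. }
    lra. }
  nra.
Qed.

Lemma hoeff_bern (m x : R) : 0 <= m <= 1 -> 0 <= x ->
  ln (1-m+m*exp(-x)) <= -x*m + x^2/8.
Proof.
  intros Hm Hx.
  set (g := fun x => -x*m + x^2/8 - ln (1-m+m*exp(-x))).
  assert (HD : forall x, 0 < 1-m+m*exp(-x)).
  { intro y. pose proof (exp_pos (-y)). destruct (Req_dec m 0); [subst; lra|]. nra. }
  assert (Hg : forall x, is_derive g x (-m + x/4 + m*exp(-x)/(1-m+m*exp(-x)))).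
  { intro y. unfold g. auto_derive. { specialize (HD y); lra. }
    specialize (HD y). field. lra. }
  cut (0 <= g x). { unfold g. lra. }
  destruct (Req_dec x 0) as [->|Hx0].
  { unfold g. rewrite Ropp_0, exp_0. replace (1-m+m*1) with 1 by ring. rewrite ln_1. lra. }
  destruct (MVT_cor3 g (fun x => -m + x/4 + m*exp(-x)/(1-m+m*exp(-x))) 0 x)
    as [e [He1 [He2 He3]]]; [lra| intros; apply is_derive_Reals, Hg |].
  rewrite He3.
  assert (g 0 = 0).
  { unfold g. rewrite Ropp_0, exp_0. replace (1-m+m*1) with 1 by ring. rewrite ln_1. lra. }
  rewrite H. pose proof (gprime_nonneg m e Hm He1). nra.
Qed.

Lemma sumd_ext d f g : (forall i, (i < d)%nat -> f i = g i) -> sumd d f = sumd d g.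
Proof. induction d; simpl; intros H; auto. rewrite IHd by (intros; apply H; lia). rewrite H by lia. auto. Qed.
Lemma sumd_le d f g : (forall i, (i < d)%nat -> f i <= g i) -> sumd d f <= sumd d g.
Proof. induction d; simpl; intros H; [lra|]. pose proof (H d ltac:(lia)). pose proof (IHd ltac:(intros; apply H; lia)). lra. Qed.
Lemma sumd_plus d f g : sumd d (fun i => f i + g i) = sumd d f + sumd d g.
Proof. induction d; simpl; [lra|]. rewrite IHd. lra. Qed.
Lemma sumd_scal d c f : sumd d (fun i => c * f i) = c * sumd d f.
Proof. induction d; simpl; [lra|]. rewrite IHd. lra. Qed.
Lemma sumd_const d c : sumd d (fun _ => c) = INR d * c.
Proof. induction d; simpl sumd; [simpl; lra|]. rewrite IHd, S_INR. lra. Qed.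

Lemma exp_tangent a z : exp z * (1 + (a - z)) <= exp a.
Proof.
  replace (exp a) with (exp z * exp (a - z)) by (rewrite <- exp_plus; f_equal; ring).
  apply Rmult_le_compat_l. left; apply exp_pos. apply exp_ineq1_le.
Qed.

Lemma exp_convex l x : 0 <= l <= 1 -> exp (-x*l) <= 1 - l + l*exp(-x).
Proof.
  intros Hl.
  pose proof (exp_tangent 0 (-x*l)) as H0. pose proof (exp_tangent (-x) (-x*l)) as H1.
  rewrite exp_0 in H0.
  assert (H2 : (1-l) * (exp (-x*l) * (1 + (0 - -x*l))) <= (1-l)*1) by (apply Rmult_le_compat_l; lra).
  assert (H3 : l * (exp (-x*l) * (1 + (-x - -x*l))) <= l*exp(-x)) by (apply Rmult_le_compat_l; lra).
  replace (exp (-x*l)) with ((1-l) * (exp (-x*l) * (1 + (0 - -x*l))) + l * (exp (-x*l) * (1 + (-x - -x*l)))) by ring.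
  lra.
Qed.
Lemma ln_le' x y : 0 < x -> x <= y -> ln x <= ln y.
Proof. intros. destruct H0. left; apply ln_increasing; auto. subst; lra. Qed.
Lemma exp_le' x y : x <= y -> exp x <= exp y.
Proof. intros. destruct H. left; apply exp_increasing; auto. subst; lra. Qed.
Lemma ln_div' x y : 0 < x -> 0 < y -> ln (x / y) = ln x - ln y.
Proof. intros. unfold Rdiv. rewrite ln_mult, ln_Rinv; try lra. apply Rinv_0_lt_compat; auto. Qed.
Lemma ln_le_sub1 y : 0 < y -> ln y <= y - 1.
Proof. intros. pose proof (exp_ineq1_le (ln y)). rewrite exp_ln in H0; lra. Qed.

Lemma hoeffding d (P L : nat -> R) eta : 0 < eta -> (forall i, (i < d)%nat -> 0 <= P i) ->
  sumd d P = 1 -> (forall i, (i < d)%nat -> 0 <= L i <= 1) ->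
  0 < sumd d (fun i => P i * exp (- eta * L i)) /\
  ln (sumd d (fun i => P i * exp (- eta * L i))) <= - eta * sumd d (fun i => P i * L i) + eta^2/8.
Proof.
  intros He HP HS HL.
  set (m := sumd d (fun i => P i * L i)).
  assert (Hm0 : 0 <= m).
  { unfold m. rewrite <- (Rmult_0_l (sumd d (fun _ => 1))), <- sumd_scal.
    apply sumd_le. intros i Hi. specialize (HP i Hi); specialize (HL i Hi). nra. }
  assert (Hm1 : m <= 1).
  { rewrite <- HS. apply sumd_le. intros i Hi. specialize (HP i Hi); specialize (HL i Hi). nra. }
  assert (Hpos : 0 < sumd d (fun i => P i * exp (- eta * L i))).
  { apply Rlt_le_trans with (exp (-eta) * sumd d P).
    rewrite HS, Rmult_1_r; apply exp_pos.
    rewrite <- sumd_scal. apply sumd_le. intros i Hi. specialize (HP i Hi); specialize (HL i Hi).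
    assert (exp (-eta) <= exp (-eta * L i)) by (apply exp_le'; nra). nra. }
  split; auto.
  apply Rle_trans with (ln (1 - m + m * exp (- eta))).
  - apply ln_le'; auto.
    replace (1 - m + m * exp (- eta)) with (sumd d (fun i => P i + ((-1 + exp (-eta)) * (P i * L i)))).
    2:{ rewrite sumd_plus, sumd_scal, HS. unfold m. ring. }
    apply sumd_le. intros i Hi. specialize (HP i Hi). pose proof (exp_convex (L i) eta (HL i Hi)).
    replace (- eta * L i) with (-eta * L i) by ring.
    replace (P i + (-1 + exp (- eta)) * (P i * L i)) with (P i * (1 - L i + L i * exp (-eta))) by ring.
    apply Rmult_le_compat_l; auto.
  - replace (-eta * m) with (- eta * m) by ring. apply hoeff_bern; lra.
Qed.

Lemma pythag d alpha p' v q : (1 <= d)%nat -> 0 < alpha ->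
  in_simplex_alpha d alpha p' ->
  (forall x, in_simplex_alpha d alpha x -> KL d p' v <= KL d x v) ->
  (forall i, (i < d)%nat -> 0 < v i) -> sumd d v = 1 ->
  in_simplex_alpha d alpha q ->
  0 <= sumd d (fun i => q i * ln (p' i / v i)).
Proof.
  intros Hd Ha [[Hp1 Hp2] Hp3] Hmin Hv Hsv [[Hq1 Hq2] Hq3].
  assert (Had : 0 < alpha / INR d).
  { apply Rdiv_lt_0_compat; auto. apply lt_0_INR; lia. }
  assert (Hpp : forall i, (i < d)%nat -> 0 < p' i).
  { intros i Hi. specialize (Hp3 i Hi). lra. }
  assert (Hqp : forall i, (i < d)%nat -> 0 < q i).
  { intros i Hi. specialize (Hq3 i Hi). lra. }
  set (D := sumd d (fun i => (q i - p' i) * ln (p' i / v i))).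
  set (C := sumd d (fun i => (q i - p' i)^2 / p' i)).
  assert (HC : 0 <= C).
  { unfold C. rewrite <- (Rmult_0_l (sumd d (fun _ => 1))), <- sumd_scal.
    apply sumd_le. intros i Hi. specialize (Hpp i Hi).
    rewrite Rmult_0_l. apply Rdiv_le_0_compat; auto. apply pow2_ge_0. }
  assert (Heps : forall e, 0 < e <= 1 -> 0 <= e * D + e^2 * C).
  { intros e He.
    set (x := fun i => p' i + e * (q i - p' i)).
    assert (Hx : in_simplex_alpha d alpha x).
    { unfold x; split; [split|].
      - intros i Hi. specialize (Hp1 i Hi). specialize (Hq1 i Hi). nra.
      - rewrite sumd_plus, sumd_scal.
        replace (sumd d (fun i => q i - p' i)) with (sumd d (fun i => q i + (-1) * p' i))
          by (apply sumd_ext; intros; ring).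
        rewrite sumd_plus, sumd_scal, Hp2, Hq2. ring.
      - intros i Hi. specialize (Hp3 i Hi). specialize (Hq3 i Hi). nra. }
    pose proof (Hmin x Hx) as Hk.
    assert (KL d x v <= KL d p' v + e * sumd d (fun i => q i - p' i) + e * D + e^2 * C).
    { unfold KL, D, C. rewrite <- !sumd_scal, <- !sumd_plus.
      apply sumd_le. intros i Hi. unfold x.
      specialize (Hpp i Hi). specialize (Hqp i Hi). specialize (Hv i Hi).
      assert (Hxp : 0 < p' i + e * (q i - p' i)) by nra.
      replace ((p' i + e * (q i - p' i)) / v i) with
        (((p' i + e * (q i - p' i)) / p' i) * (p' i / v i)) by (field; lra).
      rewrite ln_mult; try (apply Rdiv_lt_0_compat; lra).
      pose proof (ln_le_sub1 ((p' i + e * (q i - p' i)) / p' i) ltac:(apply Rdiv_lt_0_compat; lra)).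
      assert ((p' i + e * (q i - p' i)) * ln ((p' i + e * (q i - p' i)) / p' i) <=
              (p' i + e * (q i - p' i)) * ((p' i + e * (q i - p' i)) / p' i - 1))
        by (apply Rmult_le_compat_l; lra).
      replace ((p' i + e * (q i - p' i)) * ((p' i + e * (q i - p' i)) / p' i - 1)) with
        (e * (q i - p' i) + e^2 * ((q i - p' i)^2 / p' i)) in H0 by (field; lra).
      nra. }
    replace (sumd d (fun i => q i - p' i)) with 0 in H.
    2:{ replace (sumd d (fun i => q i - p' i)) with (sumd d (fun i => q i + (-1) * p' i))
          by (apply sumd_ext; intros; ring).
        rewrite sumd_plus, sumd_scal, Hp2, Hq2. ring. }
    lra. }
  assert (HD : 0 <= D).
  { destruct (Rle_lt_dec 0 D); auto.
    set (e := Rmin 1 (- D / (2 * (C + 1)))).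
    assert (He : 0 < e <= 1).
    { unfold e. split. apply Rmin_pos; [lra|]. apply Rdiv_lt_0_compat; lra. apply Rmin_l. }
    assert (He2 : e <= - D / (2 * (C+1))) by apply Rmin_r.
    assert (He3 : e * (C+1) <= - D / 2).
    { apply Rle_trans with (- D / (2 * (C+1)) * (C+1)). apply Rmult_le_compat_r; lra.
      right; field; lra. }
    specialize (Heps e He). nra. }
  assert (HG : 0 <= KL d p' v).
  { unfold KL. apply Rle_trans with (sumd d (fun i => p' i + (-1) * v i)).
    - rewrite sumd_plus, sumd_scal, Hp2, Hsv. lra.
    - apply sumd_le. intros i Hi. specialize (Hpp i Hi). specialize (Hv i Hi).
      pose proof (ln_le_sub1 (v i / p' i) ltac:(apply Rdiv_lt_0_compat; lra)).
      replace (p' i / v i) with (/ (v i / p' i)) by (field; lra).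
      rewrite ln_Rinv by (apply Rdiv_lt_0_compat; lra).
      assert (p' i * ln (v i / p' i) <= p' i * (v i / p' i - 1)) by (apply Rmult_le_compat_l; lra).
      replace (p' i * (v i / p' i - 1)) with (v i - p' i) in H0 by (field; lra). lra. }
  replace (sumd d (fun i => q i * ln (p' i / v i))) with (D + KL d p' v).
  lra. unfold D, KL. rewrite <- sumd_plus. apply sumd_ext. intros; ring.
Qed.

Theorem mainTheorem3 (d : nat) (alpha eta : R) (l p : nat -> nat -> R) :
  (1 <= d)%nat ->
  0 < alpha < 1 ->
  0 < eta ->
  (forall t i, (1 <= t)%nat -> (i < d)%nat -> 0 <= l t i <= 1) ->
  share_projection_run d alpha eta l p ->
  forall (t : nat) (q : nat -> R),
    (1 <= t)%nat ->
    in_simplex_alpha d alpha q ->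
    sumd d (fun i => (p t i - q i) * l t i)
    <= / eta * sumd d (fun i => q i * ln (p (S t) i / p t i)) + eta / 8.
Proof.
  intros Hd Ha He Hl [Hp1 Hrun] t q Ht Hq.
  assert (Hdpos : 0 < INR d) by (apply lt_0_INR; lia).
  assert (HP : (forall i, (i < d)%nat -> 0 < p t i) /\ sumd d (p t) = 1).
  { destruct t as [|[|t']]; [lia| |].
    - split. intros i Hi. rewrite Hp1 by auto. apply Rdiv_lt_0_compat; lra.
      rewrite (sumd_ext _ _ (fun _ => 1 / INR d)) by auto. rewrite sumd_const. field; lra.
    - destruct (Hrun (S t') ltac:(lia)) as [[[H1 H2] H3] _]. split; auto.
      intros i Hi. specialize (H3 i Hi). assert (0 < alpha / INR d) by (apply Rdiv_lt_0_compat; lra). lra. }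
  destruct HP as [HPp HPs].
  destruct (Hrun t Ht) as [Hp' Hmin].
  set (P := p t) in *. set (L := l t) in *.
  destruct (hoeffding d P L eta He ltac:(intros; left; auto) HPs ltac:(intros; apply Hl; auto))
    as [HZ Hhoef].
  set (Z := sumd d (fun i => P i * exp (- eta * L i))) in *.
  set (v := preweight d eta P L).
  assert (Hv : forall i, (i < d)%nat -> 0 < v i).
  { intros i Hi. unfold v, preweight. fold Z. apply Rdiv_lt_0_compat; auto.
    apply Rmult_lt_0_compat; auto. apply exp_pos. }
  assert (Hsv : sumd d v = 1).
  { unfold v, preweight. fold Z.
    rewrite (sumd_ext _ _ (fun j => / Z * (P j * exp (- eta * L j)))) by (intros; field; lra).
    rewrite sumd_scal. fold Z. field; lra. }
  pose proof (pythag d alpha (p (S t)) v q Hd (proj1 Ha) Hp' Hmin Hv Hsv Hq) as HA.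
  destruct Hq as [[Hq1 Hq2] Hq3].
  assert (Hqp : forall i, (i < d)%nat -> 0 < q i).
  { intros i Hi. specialize (Hq3 i Hi). assert (0 < alpha / INR d) by (apply Rdiv_lt_0_compat; lra). lra. }
  assert (Hpp : forall i, (i < d)%nat -> 0 < p (S t) i).
  { destruct Hp' as [_ H3]. intros i Hi. specialize (H3 i Hi). assert (0 < alpha / INR d) by (apply Rdiv_lt_0_compat; lra). lra. }
  assert (Hsplit : sumd d (fun i => q i * ln (p (S t) i / P i)) =
     sumd d (fun i => q i * ln (p (S t) i / v i)) + (- eta) * sumd d (fun i => q i * L i) + (- ln Z) * sumd d q).
  { rewrite <- !sumd_scal, <- !sumd_plus. apply sumd_ext. intros i Hi.
    specialize (Hv i Hi). specialize (Hpp i Hi). specialize (HPp i Hi).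
    replace (p (S t) i / P i) with ((p (S t) i / v i) * (v i / P i)) by (field; lra).
    rewrite ln_mult by (apply Rdiv_lt_0_compat; lra).
    replace (v i / P i) with (exp (- eta * L i) / Z) by (unfold v, preweight; fold Z; field; lra).
    rewrite (ln_div' (exp (- eta * L i)) Z) by (auto; apply exp_pos). rewrite ln_exp. ring. }
  rewrite Hsplit, Hq2.
  replace (sumd d (fun i => (P i - q i) * L i)) with
     (sumd d (fun i => P i * L i) + (-1) * sumd d (fun i => q i * L i)).
  2:{ rewrite <- sumd_scal, <- sumd_plus. apply sumd_ext; intros; ring. }
  set (A := sumd d (fun i => q i * ln (p (S t) i / v i))) in *.
  set (SP := sumd d (fun i => P i * L i)) in *.
  set (SQ := sumd d (fun i => q i * L i)) in *.
  apply Rle_trans with (/ eta * (eta * (SP - SQ) - eta^2/8) + eta/8).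
  - right. field. lra.
  - apply Rplus_le_compat_r. apply Rmult_le_compat_l. left; apply Rinv_0_lt_compat; lra. lra.
Qed.
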